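(* Let $A\in\mathbb{R}^{n\times n}$, $B\in\mathbb{R}^{n\times m}$, $E\in\mathbb{R}^{n\times z}$, $C\in\mathbb{R}^{q\times n}$, $D\in\mathbb{R}^{q\times m}$, let $\gamma\ge 0$, and let $\mathcal{S}\subseteq\mathbb{R}^{m\times n}$ be a subspace with representation matrix $S=[S_1\ \cdots\ S_k]$. Suppose there exist $P\in\mathbb{S}^n$, $Q\in\mathbb{S}^q$, $R\in\Upsilon(S)$ and $L\in\mathcal{S}$ such that \[ \begin{bmatrix} P-EE^\top & AR+BL\\ (AR+BL)^\top & R+R^\top-P\end{bmatrix}\succ 0,\qquad \begin{bmatrix} Q & CR+DL\\ (CR+DL)^\top & R+R^\top-P\end{bmatrix}\succ 0, \] \[ P\succ 0,\qquad \operatorname{Tr}(Q)\le\gamma^2 . \] Then $R$ is nonsingular and $K=LR^{-1}$ belongs to $\mathcal{S}$ and is a $\gamma$-suboptimal $H_2$ controller for the system $x(t+1)=Ax(t)+Bu(t)+E\xi(t)$, $y(t)=Cx(t)+Du(t)$.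
   Context: Consider the discrete-time system $x(t+1)=Ax(t)+Bu(t)+E\xi(t)$, $y(t)=Cx(t)+Du(t)$ with state $x\in\mathbb{R}^n$, input $u\in\mathbb{R}^m$, exogenous input $\xi\in\mathbb{R}^z$, output $y\in\mathbb{R}^q$. For a static feedback $u=Kx$, $K\in\mathbb{R}^{m\times n}$, the closed loop is $x(t+1)=(A+BK)x(t)+E\xi(t)$, $y(t)=(C+DK)x(t)$; let $G_K(z)$ denote its transfer function from $\xi$ to $y$. $K$ is called a $\gamma$-suboptimal $H_2$ controller if $\|G_K(z)\|_{H_2}\le\gamma$. $\mathbb{S}^n$ denotes the real symmetric $n\times n$ matrices. If $S_1,\dots,S_k\in\mathbb{R}^{m\times n}$ form a basis of the subspace $\mathcal{S}$, the matrix $S=[S_1\ S_2\ \cdots\ S_k]\in\mathbb{R}^{m\times nk}$ is a representation matrix of $\mathcal{S}$, and $\Upsilon(S):=\{R\in\mathbb{R}^{n\times n}\mid \exists\Lambda\in\mathbb{S}^k:\ S(I_k\otimes R)=S(\Lambda\otimes I_n)\}$, where $\otimes$ is the Kronecker product. *)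

(* Defs.v *)
From HB Require Import structures.
From mathcomp Require Import all_boot all_order all_algebra.
From mathcomp Require Import all_classical all_reals all_analysis.
Set Implicit Arguments. Unset Strict Implicit. Unset Printing Implicit Defensive.
Import Order.TTheory GRing.Theory Num.Theory.
Local Open Scope ring_scope.

Section Defs.
Variable R : realType.

(* decompose an index of 'I_(a*b) into the pair (i, j) with index i*b + j
   (row-major, the standard Kronecker convention; inverse of mxvec_index). *)
Definition unpair (a b : nat) (r : 'I_(a * b)) : 'I_a * 'I_b :=
  enum_val (cast_ord (esym (mxvec_cast a b)) r).

Definition kron (p1 q1 p2 q2 : nat) (A : 'M[R]_(p1, q1)) (B : 'M[R]_(p2, q2))
  : 'M[R]_(p1 * p2, q1 * q2) :=
  \matrix_(r < p1 * p2, c < q1 * q2)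
    (A (unpair r).1 (unpair c).1 * B (unpair r).2 (unpair c).2).

(* representation matrix S = [S_1 S_2 ... S_k] in R^{m x nk} *)
Definition repmx (m n k : nat) (S : 'I_k -> 'M[R]_(m, n)) : 'M[R]_(m, k * n) :=
  \matrix_(r < m, c < k * n) S (unpair c).1 r (unpair c).2.

Definition lin_indep (m n k : nat) (S : 'I_k -> 'M[R]_(m, n)) : Prop :=
  forall c : 'I_k -> R, \sum_(i < k) c i *: S i = 0 -> forall i, c i = 0.

Definition in_span (m n k : nat) (S : 'I_k -> 'M[R]_(m, n)) (L : 'M[R]_(m, n)) : Prop :=
  exists c : 'I_k -> R, L = \sum_(i < k) c i *: S i.

Definition Upsilon (m n k : nat) (S : 'I_k -> 'M[R]_(m, n)) (X : 'M[R]_n) : Prop :=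
  exists Lam : 'M[R]_k, Lam^T = Lam /\
    repmx S *m kron (1%:M : 'M[R]_k) X = repmx S *m kron Lam (1%:M : 'M[R]_n).

Definition is_symmx (p : nat) (M : 'M[R]_p) : Prop := M^T = M.

Definition posdef (p : nat) (M : 'M[R]_p) : Prop :=
  M^T = M /\ forall x : 'cV[R]_p, x != 0 -> 0 < (x^T *m M *m x) 0 0.

(* Markov parameters of G_K(z) = (C+DK)(zI - (A+BK))^{-1} E:
   G_K(z) = sum_{t>=0} h_t z^{-(t+1)} with h_t = (C+DK)(A+BK)^t E *)
Definition markov (n m z q : nat) (A : 'M[R]_n) (B : 'M[R]_(n, m)) (E : 'M[R]_(n, z))
  (C : 'M[R]_(q, n)) (D : 'M[R]_(q, m)) (K : 'M[R]_(m, n)) (t : nat) : 'M[R]_(q, z) :=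
  (C + D *m K) *m (A + B *m K) ^+ t *m E.

(* squared H2 norm (extended real, +oo if infinite):
   ||G_K||_{H2}^2 = (1/2pi) int tr(G^* G) = sum_t ||h_t||_F^2 *)
Definition H2_norm_sq (n m z q : nat) (A : 'M[R]_n) (B : 'M[R]_(n, m)) (E : 'M[R]_(n, z))
  (C : 'M[R]_(q, n)) (D : 'M[R]_(q, m)) (K : 'M[R]_(m, n)) : \bar R :=
  (\sum_(0 <= t <oo) (\tr ((markov A B E C D K t)^T *m markov A B E C D K t))%:E)%E.

Definition H2_suboptimal (n m z q : nat) (A : 'M[R]_n) (B : 'M[R]_(n, m)) (E : 'M[R]_(n, z))
  (C : 'M[R]_(q, n)) (D : 'M[R]_(q, m)) (K : 'M[R]_(m, n)) (gamma : R) : Prop :=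
  (H2_norm_sq A B E C D K <= (gamma ^+ 2)%:E)%E.

End Defs.

(* Main.v *)
Require Import Defs.
From HB Require Import structures.
From mathcomp Require Import all_boot all_order all_algebra.
From mathcomp Require Import all_classical all_reals all_analysis.
Import Order.TTheory GRing.Theory Num.Theory.
From mathcomp Require Import lra.
Local Open Scope ring_scope.

Set Implicit Arguments. Unset Strict Implicit.

Section HT1.
Variable R : realType.

Lemma unpair_idx k n (i : 'I_k) (j : 'I_n) : unpair (mxvec_index i j) = (i, j).
Proof. by rewrite /unpair /mxvec_index cast_ordK enum_rankK. Qed.

Lemma sum_unpair k n (F : 'I_k * 'I_n -> R) :
  \sum_(s < k * n) F (unpair s) = \sum_(p : 'I_k * 'I_n) F p.
Proof.
rewrite [RHS](reindex (@unpair k n)) //.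
exists (fun p => mxvec_index p.1 p.2) => s _.
  by case: (mxvec_indexP s) => i j; rewrite unpair_idx.
by case: s => i j; rewrite unpair_idx.
Qed.
End HT1.

Section HT2.
Variable R : realType.

Lemma sum_delta p (F : 'I_p -> R) j : \sum_i F i * (i == j)%:R = F j.
Proof.
rewrite (bigD1 j) //= eqxx mulr1 big1 ?addr0 // => i /negbTE ->; by rewrite mulr0.
Qed.

Lemma repmx_mulE m n k (S : 'I_k -> 'M[R]_(m,n)) (M : 'M[R]_(k * n, k * n)) r c :
  (repmx S *m M) r c = \sum_a \sum_b S a r b * M (mxvec_index a b) c.
Proof.
rewrite (pair_bigA _ (fun a b => S a r b * M (mxvec_index a b) c)) /=.
rewrite -(@sum_unpair _ k n (fun p : 'I_k * 'I_n => S p.1 r p.2 * M (mxvec_index p.1 p.2) c)) mxE.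
apply: eq_bigr => s _; rewrite mxE; case: (mxvec_indexP s) => a b; by rewrite unpair_idx.
Qed.

Lemma kronE k1 k2 n1 n2 (A : 'M[R]_(k1,k2)) (B : 'M[R]_(n1,n2)) a b i c :
  kron A B (mxvec_index a b) (mxvec_index i c) = A a i * B b c.
Proof. by rewrite mxE !unpair_idx. Qed.

Lemma ups_rel m n k (S : 'I_k -> 'M[R]_(m,n)) (X : 'M[R]_n) (Lam : 'M[R]_k) :
  repmx S *m kron 1%:M X = repmx S *m kron Lam 1%:M ->
  forall i, S i *m X = \sum_j Lam j i *: S j.
Proof.
move=> H i; apply/matrixP => r c.
have := congr1 (fun M : 'M[R]_(m, k * n) => M r (mxvec_index i c)) H.
rewrite !repmx_mulE.
under eq_bigr => a _ do under eq_bigr => b _ do rewrite kronE !mxE.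
under [X in _ = X -> _]eq_bigr => a _ do under eq_bigr => b _ do rewrite kronE !mxE.
under eq_bigr => a _ do under eq_bigr => b _ do rewrite mulrCA.
under eq_bigr => a _ do rewrite -mulr_sumr mulrC.
rewrite sum_delta.
under eq_bigr => a _ do under eq_bigr => b _ do rewrite mulrA.
under eq_bigr => a _ do rewrite sum_delta.
move=> E; rewrite mxE E summxE.
apply: eq_bigr => a _; by rewrite mxE mulrC.
Qed.
End HT2.

Section HT3.
Variable R : realType.

Lemma ker_unit n (A : 'M[R]_n) : (forall v : 'cV_n, A *m v = 0 -> v = 0) -> A \in unitmx.
Proof.
move=> HA; rewrite -unitmx_tr -row_free_unit; apply: inj_row_free => u Hu.
have : A *m u^T = 0 by rewrite -(trmxK (A *m u^T)) trmx_mul trmxK Hu trmx0.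
by move/HA => /(congr1 trmx); rewrite trmxK trmx0.
Qed.

Lemma span_inv m n k (S : 'I_k -> 'M[R]_(m,n)) (X : 'M[R]_n) (Lam : 'M[R]_k) L :
  lin_indep S -> X \in unitmx -> (forall i, S i *m X = \sum_j Lam j i *: S j) ->
  in_span S L -> in_span S (L *m invmx X).
Proof.
move=> hind hX hS [c ->].
have comb_mul : forall d : 'I_k -> R, (\sum_i d i *: S i) *m X =
    \sum_j (\sum_i Lam j i * d i) *: S j.
  move=> d; rewrite mulmx_suml.
  under eq_bigr => i _ do rewrite -scalemxAl hS scaler_sumr.
  rewrite exchange_big /=; apply: eq_bigr => j _.
  rewrite scaler_suml; apply: eq_bigr => i _; by rewrite scalerA mulrC.
have hLam : Lam \in unitmx.
  apply: ker_unit => d hd.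
  have h0 : (\sum_i d i 0 *: S i) *m X = 0.
    rewrite comb_mul; apply: big1 => j _.
    have := congr1 (fun M : 'cV[R]_k => M j 0) hd; rewrite !mxE => ->.
    by rewrite scale0r.
  have h1 : \sum_i d i 0 *: S i = 0.
    by rewrite -(mulmxK hX (\sum_i d i 0 *: S i)) h0 mul0mx.
  apply/matrixP => i j; rewrite ord1 mxE; exact: hind h1 i.
pose d := invmx Lam *m \col_i c i.
exists (fun i => d i 0).
have hd : Lam *m d = \col_i c i by rewrite /d mulmxA mulmxV // mul1mx.
have : (\sum_i d i 0 *: S i) *m X = \sum_i c i *: S i.
  rewrite comb_mul; apply: eq_bigr => j _.
  have := congr1 (fun M : 'cV[R]_k => M j 0) hd; rewrite !mxE => ->.
  by [].
by move=> <-; rewrite mulmxK.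
Qed.
End HT3.

Section HT4.
Variable R : realType.

Definition bf a b (x : 'cV[R]_a) (M : 'M[R]_(a,b)) (y : 'cV[R]_b) : R := (x^T *m M *m y) 0 0.

Lemma tr11 (N : 'M[R]_1) : N^T 0 0 = N 0 0.
Proof. by rewrite mxE. Qed.

Lemma bfT a b (x : 'cV[R]_a) (M : 'M[R]_(a,b)) y : bf x M y = bf y M^T x.
Proof. by rewrite /bf -tr11 !trmx_mul trmxK mulmxA. Qed.

Lemma bfDm a b (x : 'cV[R]_a) (M N : 'M[R]_(a,b)) y : bf x (M + N) y = bf x M y + bf x N y.
Proof. by rewrite /bf mulmxDr mulmxDl mxE. Qed.

Lemma bfNm a b (x : 'cV[R]_a) (M : 'M[R]_(a,b)) y : bf x (- M) y = - bf x M y.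
Proof. by rewrite /bf mulmxN mulNmx mxE. Qed.

Lemma bfBm a b (x : 'cV[R]_a) (M N : 'M[R]_(a,b)) y : bf x (M - N) y = bf x M y - bf x N y.
Proof. by rewrite bfDm bfNm. Qed.

Lemma bfDl a b (x x' : 'cV[R]_a) (M : 'M[R]_(a,b)) y : bf (x + x') M y = bf x M y + bf x' M y.
Proof. by rewrite /bf linearD /= !mulmxDl mxE. Qed.

Lemma bfNl a b (x : 'cV[R]_a) (M : 'M[R]_(a,b)) y : bf (- x) M y = - bf x M y.
Proof. by rewrite /bf linearN /= !mulNmx mxE. Qed.

Lemma bfDr a b (x : 'cV[R]_a) (M : 'M[R]_(a,b)) y y' : bf x M (y + y') = bf x M y + bf x M y'.
Proof. by rewrite /bf mulmxDr mxE. Qed.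

Lemma bfNr a b (x : 'cV[R]_a) (M : 'M[R]_(a,b)) y : bf x M (- y) = - bf x M y.
Proof. by rewrite /bf mulmxN mxE. Qed.

Lemma bf0l a b (M : 'M[R]_(a,b)) y : bf 0 M y = 0.
Proof. by rewrite /bf trmx0 !mul0mx mxE. Qed.

Lemma bf0r a b (x : 'cV[R]_a) (M : 'M[R]_(a,b)) : bf x M 0 = 0.
Proof. by rewrite /bf mulmx0 mxE. Qed.

Lemma bfM a b c d (x : 'cV[R]_a) (N1 : 'M[R]_(a,b)) (M : 'M[R]_(b,c)) (N2 : 'M[R]_(c,d)) y :
  bf x (N1 *m M *m N2) y = bf (N1^T *m x) M (N2 *m y).
Proof. by rewrite /bf trmx_mul trmxK !mulmxA. Qed.

Lemma bfMl a b c (x : 'cV[R]_a) (N1 : 'M[R]_(a,b)) (M : 'M[R]_(b,c)) y :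
  bf x (N1 *m M) y = bf (N1^T *m x) M y.
Proof. by rewrite /bf trmx_mul trmxK !mulmxA. Qed.

Lemma bfMr a b c (x : 'cV[R]_a) (M : 'M[R]_(a,b)) (N2 : 'M[R]_(b,c)) y :
  bf x (M *m N2) y = bf x M (N2 *m y).
Proof. by rewrite /bf !mulmxA. Qed.

Lemma bf1 a (x y : 'cV[R]_a) : bf x 1%:M y = bf x 1%:M y.
Proof. by []. Qed.

Lemma bf_block p n (M : 'M[R]_p) (G : 'M[R]_(p,n)) (H : 'M[R]_(n,p)) (W : 'M[R]_n) v w :
  bf (col_mx v w) (block_mx M G H W) (col_mx v w) =
  bf v M v + bf v G w + bf w H v + bf w W w.
Proof.
rewrite /bf tr_col_mx mul_row_block mul_row_col !mulmxDl !mxE.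
by rewrite !addrA; congr (_ + _); rewrite -!addrA; congr (_ + _); rewrite addrC.
Qed.

Lemma bf_delta p (M : 'M[R]_p) i j : bf (delta_mx i 0) M (delta_mx j 0) = M i j.
Proof. by rewrite /bf trmx_delta -rowE -colE !mxE. Qed.

End HT4.

Section HT5.
Variable R : realType.

Lemma series_le (u : nat -> R) (b : R) : (forall t, 0 <= u t) ->
  (forall N, \sum_(t < N) u t <= b) -> (\sum_(0 <= t <oo) (u t)%:E <= b%:E)%E.
Proof.
move=> u0 ub; apply: lime_le.
  by apply: is_cvg_nneseries => t _ _; rewrite lee_fin.
apply: nearW => N /=.
by rewrite sumEFin big_mkord lee_fin.
Qed.

Lemma bfMM a b c d (x : 'cV[R]_b) (N1 : 'M[R]_(a,b)) (M : 'M[R]_(a,c)) (N2 : 'M[R]_(c,d)) y :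
  bf (N1 *m x) M (N2 *m y) = bf x (N1^T *m M *m N2) y.
Proof. by rewrite bfM trmxK. Qed.

Lemma pd_psd n (P : 'M[R]_n) : (forall x, x != 0 -> 0 < bf x P x) -> forall x, 0 <= bf x P x.
Proof.
move=> hP x; case: (eqVneq x 0) => [->|nz]; first by rewrite bf0l.
exact/ltW/hP.
Qed.

Lemma pd_unit n (P : 'M[R]_n) : (forall x, x != 0 -> 0 < bf x P x) -> P \in unitmx.
Proof.
move=> hP; apply: ker_unit => v hv; case: (eqVneq v 0) => // nz.
by have := hP v nz; rewrite /bf -mulmxA hv mulmx0 mxE ltxx.
Qed.

Lemma core p n (M : 'M[R]_p) (G : 'M[R]_(p,n)) (P X : 'M[R]_n) :
 P^T = P -> (forall x, x != 0 -> 0 < bf x P x) -> X \in unitmx ->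
 (forall x, 0 <= bf x (block_mx M G G^T (X + X^T - P)) x) ->
 forall v, bf v (G *m invmx X *m P *m (G *m invmx X)^T) v <= bf v M v.
Proof.
move=> hPs hP hX hB v.
have hPu := pd_unit hP.
set Pi := invmx P.
have hPiT : Pi^T = Pi by rewrite /Pi trmx_inv hPs.
have psdPi : forall u, 0 <= bf u Pi u.
  move=> u; have e : Pi = Pi^T *m P *m Pi by rewrite hPiT mulVmx // mul1mx.
  by rewrite {1}e -bfMM; apply: pd_psd.
set K := G *m invmx X.
set T := bf v (K *m P *m K^T) v.
set y := P *m K^T *m v.
set w := - (invmx X *m y).
have H := hB (col_mx v w); rewrite bf_block in H.
have e1 : bf v G w = - T.
  by rewrite /w bfNr /T /bf /y /K !mulmxA.
have e2 : bf w G^T v = bf v G w by rewrite bfT trmxK.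
have eW : bf w (X + X^T - P) w = bf w X w + bf w X^T w - bf w P w.
  by rewrite bfBm bfDm.
have eZt : bf w X^T w = bf w X w by rewrite bfT trmxK.
have hXw : X *m w = - y by rewrite /w mulmxN mulmxA mulmxV // mul1mx.
clearbody w.
have hPiP : Pi *m P = 1%:M by rewrite /Pi mulVmx.
have hPPi : P *m Pi = 1%:M by rewrite /Pi mulmxV.
have ea : bf (X *m w) Pi (X *m w) = T.
  rewrite hXw bfNl bfNr opprK /y bfMM /T trmx_mul trmxK hPs.
  by rewrite !mulmxA -(mulmxA _ P Pi) hPPi mulmx1.
have eE : bf (X *m w - P *m w) Pi (X *m w - P *m w) =
   bf (X *m w) Pi (X *m w) - bf w X^T w - bf w X w + bf w P w.
  rewrite bfDl bfNl !bfDr !bfNr !bfMM hPs.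
  rewrite -(mulmxA X^T Pi P) hPiP mulmx1 !hPPi !mul1mx.
  lra.
have := psdPi (X *m w - P *m w); rewrite eE ea eZt.
move: H; rewrite e2 e1 eW eZt.
lra.
Qed.

End HT5.

Unset Implicit Arguments. Set Strict Implicit.

Theorem lemma4 (R : realType) (n m z q k : nat)
  (A : 'M[R]_n) (B : 'M[R]_(n, m)) (E : 'M[R]_(n, z))
  (C : 'M[R]_(q, n)) (D : 'M[R]_(q, m)) (gamma : R)
  (S : 'I_k -> 'M[R]_(m, n))
  (P : 'M[R]_n) (Q : 'M[R]_q) (X : 'M[R]_n) (L : 'M[R]_(m, n)) :
  0 <= gamma ->
  lin_indep S ->
  is_symmx P -> is_symmx Q ->
  Upsilon S X -> in_span S L ->
  posdef (block_mx (P - E *m E^T) (A *m X + B *m L)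
                   (A *m X + B *m L)^T (X + X^T - P)) ->
  posdef (block_mx Q (C *m X + D *m L)
                   (C *m X + D *m L)^T (X + X^T - P)) ->
  posdef P ->
  \tr Q <= gamma ^+ 2 ->
  X \in unitmx /\
  in_span S (L *m invmx X) /\
  H2_suboptimal A B E C D (L *m invmx X) gamma.
Proof.
move=> hg hind hPs hQs [Lam [_ hU]] hL [_ hB1] [_ hB2] [_ hP] htr.
have hB1' : forall x, x != 0 -> 0 < bf (R:=R) x (block_mx (P - E *m E^T) (A *m X + B *m L)
                   (A *m X + B *m L)^T (X + X^T - P)) x := hB1.
have hB2' : forall x, x != 0 -> 0 < bf (R:=R) x (block_mx Q (C *m X + D *m L)
                   (C *m X + D *m L)^T (X + X^T - P)) x := hB2.
have hP' : forall x, x != 0 -> 0 < bf (R:=R) x P x := hP.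
have hX : X \in unitmx.
  apply: ker_unit => v hv; case: (eqVneq v 0) => // nz.
  have h0 : col_mx (0 : 'cV[R]_n) v != 0 by rewrite col_mx_eq0 negb_and nz orbT.
  have := hB1' _ h0; rewrite bf_block bf0l !bf0r bf0l.
  rewrite bfBm bfDm [bf v X^T v]bfT trmxK.
  have -> : bf v X v = 0 by rewrite /bf -mulmxA hv mulmx0 mxE.
  have hPv := hP' v nz.
  move=> h; exfalso; lra.
split => //.
split; first exact: (@span_inv _ _ _ _ S X Lam L hind hX (@ups_rel _ _ _ _ S X Lam hU) hL).
set K := L *m invmx X.
set AK := A + B *m K.
set CK := C + D *m K.
have hAK : (A *m X + B *m L) *m invmx X = AK.
  by rewrite mulmxDl mulmxK // -mulmxA.
have hCK : (C *m X + D *m L) *m invmx X = CK.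
  by rewrite mulmxDl mulmxK // -mulmxA.
have step1 : forall v, bf v (AK *m P *m AK^T) v <= bf v P v - bf v (E *m E^T) v.
  move=> v; have := core hPs hP' hX (pd_psd hB1') v.
  by rewrite hAK bfBm.
have step2 : forall v, bf v (CK *m P *m CK^T) v <= bf v Q v.
  by move=> v; have := core hPs hP' hX (pd_psd hB2') v; rewrite hCK.
have iter : forall N v, \sum_(t < N) bf ((AK ^+ t)^T *m v) (E *m E^T) ((AK ^+ t)^T *m v)
    + bf ((AK ^+ N)^T *m v) P ((AK ^+ N)^T *m v) <= bf v P v.
  elim => [|N IH] v.
    by rewrite big_ord0 add0r expr0 trmx1 mul1mx.
  rewrite big_ord_recr /= exprSr -mulmxE trmx_mul -mulmxA.
  set u := (AK ^+ N)^T *m v.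
  have := step1 u; rewrite bfM.
  have := IH v; rewrite -/u.
  lra.
have tr_f : forall t, \tr ((Defs.markov A B E C D K t)^T *m Defs.markov A B E C D K t) =
   \sum_(i < q) bf ((AK ^+ t)^T *m (CK^T *m delta_mx i 0)) (E *m E^T)
                   ((AK ^+ t)^T *m (CK^T *m delta_mx i 0)).
  move=> t; rewrite mxtrace_mulC /Defs.markov -/K -/AK -/CK.
  rewrite /mxtrace; apply: eq_bigr => i _; rewrite -bf_delta.
  have -> : CK *m AK ^+ t *m E *m (CK *m AK ^+ t *m E)^T =
     (CK *m AK ^+ t) *m (E *m E^T) *m (CK *m AK ^+ t)^T.
    by rewrite [(CK *m AK ^+ t *m E)^T]trmx_mul !mulmxA.
  by rewrite bfM trmx_mul -!mulmxA.
have tr_ge0 : forall t, 0 <= \tr ((Defs.markov A B E C D K t)^T *m Defs.markov A B E C D K t).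
  move=> t; rewrite /mxtrace; apply: sumr_ge0 => i _; rewrite mxE.
  apply: sumr_ge0 => j _; rewrite mxE -expr2; exact: sqr_ge0.
rewrite /H2_suboptimal /H2_norm_sq; apply: series_le => // N.
under eq_bigr => t _ do rewrite tr_f.
rewrite exchange_big /=; apply: le_trans htr.
apply: (@le_trans _ _ (\sum_(i < q) bf (CK^T *m delta_mx i 0) P (CK^T *m delta_mx i 0))).
  apply: ler_sum => i _.
  have := iter N (CK^T *m delta_mx i 0).
  have := pd_psd hP' ((AK ^+ N)^T *m (CK^T *m delta_mx i 0)).
  lra.
rewrite /mxtrace; apply: ler_sum => i _; rewrite -bf_delta bfMM trmxK.
exact: step2.
Qed.
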